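(* For every $n\ge4$, the space $\mathrm{CSN}_n$, with the length metric obtained by giving each orthant $O_\pi$ its Euclidean metric and gluing, is not a CAT(0) space.
   Context: $X$ is a set of $n\ge4$ labels. A split of $X$ is an unordered partition of $X$ into two nonempty sets; it is trivial if one part is a singleton. A circular ordering of $X$ is a cyclic arrangement $\pi=(x_1,\dots,x_n)$ up to rotation and reflection; a split is circular w.r.t. $\pi$ if it has the form $\{\{x_{i+1},\dots,x_j\},X\setminus\{x_{i+1},\dots,x_j\}\}$ (indices mod $n$). Let $\delta=2^{n-1}-n-1$ and give $\mathbb R^\delta$ coordinates indexed by nontrivial splits. For each circular ordering $\pi$, $O_\pi\subset\mathbb R^\delta$ is the set of nonnegative vectors whose support consists of splits circular w.r.t. $\pi$ (an orthant of dimension $n(n-3)/2$), and $\mathrm{CSN}_n=\bigcup_\pi O_\pi$. *)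

(* Defs.v *)
From mathcomp Require Import all_boot all_fingroup.
From Stdlib Require Import Reals.

Set Implicit Arguments.
Unset Strict Implicit.
Unset Printing Implicit Defensive.

(* An unordered split {A, X \ A} is represented by its part NOT containing
   the label ord0-equivalent 0; nontrivial means both parts have >= 2 elems. *)
Definition nontriv_split (n : nat) (A : {set 'I_n}) : bool :=
  [&& [forall x : 'I_n, (val x == 0%N) ==> (x \notin A)],
      (2 <= #|A|)%N & (2 <= n - #|A|)%N].

(* circular ordering pi = (p 0, p 1, ..., p (n-1)); position of x is p^-1 x.
   cyc_interval p i k = the k consecutive labels starting at position i. *)
Definition cyc_interval (n : nat) (p : {perm 'I_n}) (i k : nat) : {set 'I_n} :=
  [set x : 'I_n | (((val ((p^-1)%g x) + n - i) %% n) < k)%N].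

Definition circular (n : nat) (p : {perm 'I_n}) (A : {set 'I_n}) : Prop :=
  exists i k : nat, (i < n)%N /\ (0 < k < n)%N /\
    (A = cyc_interval p i k \/ ~: A = cyc_interval p i k).

(* A point has a coordinate for every subset; only coordinates indexed by
   (representatives of) nontrivial splits may be nonzero on CSN_n. *)
Definition pt (n : nat) := {set 'I_n} -> R.

Definition edist (n : nat) (x y : pt n) : R :=
  sqrt (\big[Rplus/0%R]_(A : {set 'I_n}) Rsqr (x A - y A)).

Definition in_orthant (n : nat) (p : {perm 'I_n}) (v : pt n) : Prop :=
  forall A : {set 'I_n}, (0 <= v A)%R /\
    (v A <> 0%R -> nontriv_split A /\ circular p A).

Definition in_CSN (n : nat) (v : pt n) : Prop :=
  exists p : {perm 'I_n}, in_orthant p v.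

(* strings x = x0, x1, ..., xk = y with consecutive points in a common
   orthant (Bridson-Haefliger I.7.4); the length is the sum of Euclidean
   distances, and the glued metric is the infimum of string lengths. *)
Fixpoint is_string (n : nat) (x : pt n) (l : list (pt n)) : Prop :=
  match l with
  | nil => True
  | y :: l' => (exists p : {perm 'I_n}, in_orthant p x /\ in_orthant p y)
               /\ is_string y l'
  end.

Fixpoint string_len (n : nat) (x : pt n) (l : list (pt n)) : R :=
  match l with
  | nil => 0%R
  | y :: l' => (edist x y + string_len y l')%R
  end.

Definition string_lengths (n : nat) (x y : pt n) (r : R) : Prop :=
  exists l : list (pt n), is_string x l /\ last x l = y /\ r = string_len x l.

Definition is_glb (E : R -> Prop) (m : R) : Prop :=
  (forall r, E r -> (m <= r)%R) /\
  (forall b, (forall r, E r -> (b <= r)%R) -> (b <= m)%R).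

Definition geodesic {T : Type} (S : T -> Prop) (d : T -> T -> R)
  (x y : T) (g : R -> T) : Prop :=
  g 0%R = x /\ g (d x y) = y /\
  (forall s, (0 <= s <= d x y)%R -> S (g s)) /\
  (forall s t, (0 <= s <= d x y)%R -> (0 <= t <= d x y)%R ->
     d (g s) (g t) = Rabs (s - t)).

Definition geodesic_space {T : Type} (S : T -> Prop) (d : T -> T -> R) : Prop :=
  forall x y, S x -> S y -> exists g, geodesic S d x y g.

Definition dE2 (P Q : R * R) : R :=
  sqrt (Rsqr (fst P - fst Q) + Rsqr (snd P - snd Q)).

Definition cmp_pt (P Q : R * R) (L s : R) : R * R :=
  (fst P + (s / L) * (fst Q - fst P), snd P + (s / L) * (snd Q - snd P))%R.

Definition succ3 (k : nat) : nat := ((k + 1) %% 3)%N.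

Definition CAT0_ineq {T : Type} (S : T -> Prop) (d : T -> T -> R) : Prop :=
  forall (v : nat -> T) (g : nat -> R -> T) (V : nat -> R * R),
    (forall k, (k < 3)%N -> S (v k)) ->
    (forall k, (k < 3)%N -> geodesic S d (v k) (v (succ3 k)) (g k)) ->
    (forall k, (k < 3)%N -> dE2 (V k) (V (succ3 k)) = d (v k) (v (succ3 k))) ->
    forall k l s t, (k < 3)%N -> (l < 3)%N ->
      (0 <= s <= d (v k) (v (succ3 k)))%R ->
      (0 <= t <= d (v l) (v (succ3 l)))%R ->
      (d (g k s) (g l t) <=
       dE2 (cmp_pt (V k) (V (succ3 k)) (d (v k) (v (succ3 k))) s)
           (cmp_pt (V l) (V (succ3 l)) (d (v l) (v (succ3 l))) t))%R.

Definition CAT0 {T : Type} (S : T -> Prop) (d : T -> T -> R) : Prop :=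
  geodesic_space S d /\ CAT0_ineq S d.

(* Main.v *)
From Stdlib Require Import Lia Arith.
Module Arith4.
Definition In' (n i k P : nat) := (i<=P /\ P<i+k) \/ (P<i /\ P+n<i+k).
Definition Sep n i k X Y Z W :=
  (In' n i k X /\ In' n i k Y /\ ~In' n i k Z /\ ~In' n i k W) \/
  (~In' n i k X /\ ~In' n i k Y /\ In' n i k Z /\ In' n i k W).
Lemma cross0 n i k x y z w : i < n -> w < n -> x < y -> y < z -> z < w ->
  Sep n i k x z y w -> False.
Proof. unfold Sep, In'. intros. lia. Qed.
Lemma SepA n i k X Y Z W : Sep n i k X Y Z W -> Sep n i k Y X Z W.
Proof. unfold Sep; tauto. Qed.
Lemma SepB n i k X Y Z W : Sep n i k X Y Z W -> Sep n i k X Y W Z.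
Proof. unfold Sep; tauto. Qed.
Lemma SepC n i k X Y Z W : Sep n i k X Y Z W -> Sep n i k Z W X Y.
Proof. unfold Sep; tauto. Qed.
Lemma cross n i k X Y Z W : i < n -> X < n -> Y < n -> Z < n -> W < n ->
  Sep n i k X Y Z W ->
  ~ ((X<Z<Y /\ Y<W) \/ (X<W<Y /\ Y<Z) \/ (Y<Z<X /\ X<W) \/ (Y<W<X /\ X<Z) \/
     (Z<X<W /\ W<Y) \/ (Z<Y<W /\ W<X) \/ (W<X<Z /\ Z<Y) \/ (W<Y<Z /\ Z<X)).
Proof.
intros Hi HX HY HZ HW H Hc.
destruct Hc as [[[? ?] ?]|[[[? ?] ?]|[[[? ?] ?]|[[[? ?] ?]|[[[? ?] ?]|[[[? ?] ?]|[[[? ?] ?]|[[? ?] ?]]]]]]]].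
- eapply (cross0 n i k X Z Y W); try lia; unfold Sep in *; tauto.
- eapply (cross0 n i k X W Y Z); try lia; unfold Sep in *; tauto.
- eapply (cross0 n i k Y Z X W); try lia; unfold Sep in *; tauto.
- eapply (cross0 n i k Y W X Z); try lia; unfold Sep in *; tauto.
- eapply (cross0 n i k Z X W Y); try lia; unfold Sep in *; tauto.
- eapply (cross0 n i k Z Y W X); try lia; unfold Sep in *; tauto.
- eapply (cross0 n i k W X Z Y); try lia; unfold Sep in *; tauto.
- eapply (cross0 n i k W Y Z X); try lia; unfold Sep in *; tauto.
Qed.
Lemma arith n P0 P1 P2 P3 i1 k1 i2 k2 i3 k3 :
  P0 < n -> P1 < n -> P2 < n -> P3 < n -> i1 < n -> i2 < n -> i3 < n ->
  P0 <> P1 -> P0 <> P2 -> P0 <> P3 -> P1 <> P2 -> P1 <> P3 -> P2 <> P3 ->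
  Sep n i1 k1 P1 P2 P0 P3 -> Sep n i2 k2 P1 P3 P0 P2 -> Sep n i3 k3 P2 P3 P0 P1 -> False.
Proof.
do 13 intro; intros S1 S2 S3. apply cross in S1; auto. apply cross in S2; auto. apply cross in S3; auto.
destruct (Nat.lt_ge_cases P0 P1), (Nat.lt_ge_cases P0 P2), (Nat.lt_ge_cases P0 P3),
  (Nat.lt_ge_cases P1 P2), (Nat.lt_ge_cases P1 P3), (Nat.lt_ge_cases P2 P3);
  first [ clear S2 S3; apply S1; clear S1; lia | clear S1 S3; apply S2; clear S2; lia
        | clear S1 S2; apply S3; clear S3; lia | clear S1 S2 S3; lia ].
Qed.
End Arith4.
From HB Require Import structures.
Require Import Defs.
From mathcomp Require Import all_boot all_fingroup zify.
From Stdlib Require Import Reals Lra.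

Set Implicit Arguments.
Unset Strict Implicit.
Unset Printing Implicit Defensive.

Lemma Rplus_assoc' : associative Rplus.
Proof. by move=> x y z; rewrite Rplus_assoc. Qed.
Lemma Rplus_comm' : commutative Rplus.
Proof. exact: Rplus_comm. Qed.
Lemma Rplus_0_l' : left_id 0%R Rplus.
Proof. exact: Rplus_0_l. Qed.
HB.instance Definition _ := Monoid.isComLaw.Build R 0%R Rplus Rplus_assoc' Rplus_comm' Rplus_0_l'.

Lemma modlem n P i k : P < n -> i < n ->
  ((P + n - i) %% n < k) = ((i <= P) && (P < i + k)) || ((P < i) && (P + n < i + k)).
Proof.
move=> Pn inn. case: (leqP i P) => iP /=.
- have -> : P + n - i = (P - i) + n by lia.
  rewrite modnDr modn_small; last by lia.
  apply/idP/idP; lia.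
- rewrite modn_small; last by lia.
  apply/idP/idP; lia.
Qed.

Section Comb.
Variable m : nat.
Local Notation n := m.+4.

Definition i0 : 'I_n := @Ordinal n 0 isT.
Definition i1 : 'I_n := @Ordinal n 1 isT.
Definition i2 : 'I_n := @Ordinal n 2 isT.
Definition i3 : 'I_n := @Ordinal n 3 isT.

Definition sa : {set 'I_n} := [set i1; i2].
Definition sb : {set 'I_n} := ~: [set i0; i2].
Definition sc : {set 'I_n} := ~: [set i0; i1].

Lemma val_tperm (a b x : 'I_n) :
  val (tperm a b x) = if x == a then val b else if x == b then val a else val x.
Proof.
case: (x =P a) => [->|/eqP xa]; first by rewrite tpermL.
case: (x =P b) => [->|/eqP xb]; first by rewrite tpermR.
by rewrite tpermD // eq_sym.
Qed.

Lemma memI (p : {perm 'I_n}) i k x : i < n ->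
  (x \in cyc_interval p i k) =
  ((i <= val ((p^-1)%g x)) && (val ((p^-1)%g x) < i + k)) ||
  ((val ((p^-1)%g x) < i) && (val ((p^-1)%g x) + n < i + k)).
Proof. by move=> hi; rewrite inE modlem //; apply: ltn_ord. Qed.

Lemma eqo (x y : 'I_n) : (x == y) = (val x == val y).
Proof. by []. Qed.

Lemma circ_1a : circular (1%g : {perm _}) sa.
Proof. exists 1, 2; split; first by []. split; first by [].
left; apply/setP => x; rewrite memI // invg1 perm1 !inE !eqo /=.
have := ltn_ord x; case: x => [x hx] /= _. apply/idP/idP; lia. Qed.

Ltac circ_tac := apply/setP => -[[|[|[|y]]] hy];
  rewrite memI // ?invg1 ?perm1 ?tpermV ?val_tperm !inE ?eqo /=; apply/idP/idP; lia.

Definition p12 : {perm 'I_n} := tperm i1 i2.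
Definition p01 : {perm 'I_n} := tperm i0 i1.
Definition pid : {perm 'I_n} := 1%g.

Lemma circ_1c : circular pid sc.
Proof. exists 2, m.+2; split; first by []. split; first by lia. left; rewrite /pid; circ_tac. Qed.
Lemma circ_12a : circular p12 sa.
Proof. exists 1, 2; split; first by []. split; first by lia. left; rewrite /p12; circ_tac. Qed.
Lemma circ_12b : circular p12 sb.
Proof. exists 2, m.+2; split; first by []. split; first by lia. left; rewrite /p12; circ_tac. Qed.
Lemma circ_01b : circular p01 sb.
Proof. exists 3, m.+2; split; first by []. split; first by lia. left; rewrite /p01; circ_tac. Qed.
Lemma circ_01c : circular p01 sc.
Proof. exists 2, m.+2; split; first by []. split; first by lia. left; rewrite /p01; circ_tac. Qed.

Lemma card_sa : #|sa| = 2.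
Proof. by rewrite cards2. Qed.
Lemma card_compl (x y : 'I_n) : x != y -> #|~: [set x; y]| = m.+2.
Proof. move=> xy. have := cardsC [set x; y]. rewrite cards2 xy card_ord. lia. Qed.

Lemma nt_sa : nontriv_split sa.
Proof.
apply/and3P; split; last by rewrite card_sa.
- apply/forallP => y; apply/implyP => /eqP h; by rewrite !inE !eqo h.
- by rewrite card_sa.
Qed.
Lemma nt_sb : nontriv_split sb.
Proof.
apply/and3P; split; last by rewrite /sb card_compl //; lia.
- apply/forallP => y; apply/implyP => /eqP h; by rewrite !inE !eqo h.
- by rewrite /sb card_compl.
Qed.
Lemma nt_sc : nontriv_split sc.
Proof.
apply/and3P; split; last by rewrite /sc card_compl //; lia.
- apply/forallP => y; apply/implyP => /eqP h; by rewrite !inE !eqo h.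
- by rewrite /sc card_compl.
Qed.

Lemma ab : sa != sb.
Proof. apply/negP => /eqP /setP /(_ i3). by rewrite !inE. Qed.
Lemma ac : sa != sc.
Proof. apply/negP => /eqP /setP /(_ i1). by rewrite !inE. Qed.
Lemma bc : sb != sc.
Proof. apply/negP => /eqP /setP /(_ i2). by rewrite !inE. Qed.

Lemma bridge i k P : (((i <= P) && (P < i + k)) || ((P < i) && (P + n < i + k))) <-> Arith4.In' n i k P.
Proof. rewrite /Arith4.In'; split => h; lia. Qed.

Section Pi.
Variable pi : {perm 'I_n}.
Let P (x : 'I_n) := val ((pi^-1)%g x).

Lemma sepl (A : {set 'I_n}) (x y z w : 'I_n) : x \in A -> y \in A -> z \notin A -> w \notin A -> circular pi A ->
  exists i k, (i < n)%coq_nat /\ Arith4.Sep n i k (P x) (P y) (P z) (P w).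
Proof.
move=> hx hy hz hw [i [k [hi [_ [E|E]]]]]; exists i, k; (split; first by apply/ltP); rewrite /Arith4.Sep.
- left; split; [|split; [|split]].
  + by apply/bridge; rewrite -memI // -E.
  + by apply/bridge; rewrite -memI // -E.
  + by move/bridge; rewrite -memI // -E; apply/negP.
  + by move/bridge; rewrite -memI // -E; apply/negP.
- right; split; [|split; [|split]].
  + by move/bridge; rewrite -memI // -E inE hx.
  + by move/bridge; rewrite -memI // -E inE hy.
  + by apply/bridge; rewrite -memI // -E inE.
  + by apply/bridge; rewrite -memI // -E inE.
Qed.

Lemma Pn x : (P x < n)%coq_nat.
Proof. apply/ltP; exact: ltn_ord. Qed.

Lemma Pneq x y : x != y -> P x <> P y.
Proof. move=> /eqP xy /val_inj /perm_inj; exact: xy. Qed.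

Lemma nocirc : circular pi sa -> circular pi sb -> circular pi sc -> False.
Proof.
move=> ca cb cc.
have [i1' [k1 [h1 S1]]] := @sepl sa i1 i2 i0 i3 ltac:(by rewrite !inE) ltac:(by rewrite !inE)
   ltac:(by rewrite !inE) ltac:(by rewrite !inE) ca.
have [i2' [k2 [h2 S2]]] := @sepl sb i1 i3 i0 i2 ltac:(by rewrite !inE) ltac:(by rewrite !inE)
   ltac:(by rewrite !inE) ltac:(by rewrite !inE) cb.
have [i3' [k3 [h3 S3]]] := @sepl sc i2 i3 i0 i1 ltac:(by rewrite !inE) ltac:(by rewrite !inE)
   ltac:(by rewrite !inE) ltac:(by rewrite !inE) cc.
refine (@Arith4.arith _ _ _ _ _ _ _ _ _ _ _ (Pn i0) (Pn i1) (Pn i2) (Pn i3) h1 h2 h3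
  (@Pneq i0 i1 isT) (@Pneq i0 i2 isT) (@Pneq i0 i3 isT) (@Pneq i1 i2 isT) (@Pneq i1 i3 isT) (@Pneq i2 i3 isT) S1 S2 S3).
Qed.
End Pi.

Lemma ba : sb != sa. Proof. by rewrite eq_sym ab. Qed.
Lemma ca : sc != sa. Proof. by rewrite eq_sym ac. Qed.
Lemma cb : sc != sb. Proof. by rewrite eq_sym bc. Qed.

Local Open Scope R_scope.

Definition mk (a b c : R) : pt n := fun A =>
  (if A == sa then a else 0) + (if A == sb then b else 0) + (if A == sc then c else 0).

Lemma mk_a a b c : mk a b c sa = a.
Proof. rewrite /mk eqxx (negbTE ab) (negbTE ac); ring. Qed.
Lemma mk_b a b c : mk a b c sb = b.
Proof. rewrite /mk eqxx (negbTE ba) (negbTE bc); ring. Qed.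
Lemma mk_c a b c : mk a b c sc = c.
Proof. rewrite /mk eqxx (negbTE ca) (negbTE cb); ring. Qed.

Definition rho (x y : pt n) :=
  sqrt (Rsqr (x sa - y sa) + Rsqr (x sb - y sb) + Rsqr (x sc - y sc)).

Lemma edist_mk a b c a' b' c' : edist (mk a b c) (mk a' b' c') =
  sqrt (Rsqr (a - a') + Rsqr (b - b') + Rsqr (c - c')).
Proof.
rewrite /edist (bigD1 sa) //= (bigD1 sb) ?ba //= (bigD1 sc) ?ca ?cb //= big1.
  by rewrite !mk_a !mk_b !mk_c; congr sqrt; ring.
move=> A /andP [/andP [h1 h2] h3].
rewrite /mk (negbTE h1) (negbTE h2) (negbTE h3) /Rsqr; ring.
Qed.

Lemma rho_le_edist x y : rho x y <= edist x y.
Proof.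
rewrite /edist /rho (bigD1 sa) //= (bigD1 sb) ?ba //= (bigD1 sc) ?ca ?cb //=.
apply: sqrt_le_1_alt.
set rest := \big[Rplus/0]_(_ | _) _.
have : 0 <= rest.
  by apply: big_ind => [|u v hu hv|i _]; [lra|lra|apply: Rle_0_sqr].
lra.
Qed.

Lemma mink u1 u2 u3 v1 v2 v3 :
  sqrt (Rsqr (u1 + v1) + Rsqr (u2 + v2) + Rsqr (u3 + v3)) <=
  sqrt (Rsqr u1 + Rsqr u2 + Rsqr u3) + sqrt (Rsqr v1 + Rsqr v2 + Rsqr v3).
Proof.
set U := Rsqr u1 + Rsqr u2 + Rsqr u3.
set V := Rsqr v1 + Rsqr v2 + Rsqr v3.
have hU : 0 <= U by rewrite /U; have := Rle_0_sqr u1; have := Rle_0_sqr u2; have := Rle_0_sqr u3; lra.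
have hV : 0 <= V by rewrite /V; have := Rle_0_sqr v1; have := Rle_0_sqr v2; have := Rle_0_sqr v3; lra.
have hsU := sqrt_sqrt U hU. have hsV := sqrt_sqrt V hV.
have pU := sqrt_pos U. have pV := sqrt_pos V.
have cs : u1 * v1 + u2 * v2 + u3 * v3 <= sqrt U * sqrt V.
  case: (Rle_or_lt (u1 * v1 + u2 * v2 + u3 * v3) 0) => h; first nra.
  rewrite -sqrt_mult_alt //.
  rewrite -(sqrt_Rsqr (u1 * v1 + u2 * v2 + u3 * v3)); last lra.
  apply: sqrt_le_1_alt. rewrite /U /V.
  have := Rle_0_sqr (u1*v2-u2*v1). have := Rle_0_sqr (u1*v3-u3*v1).
  have := Rle_0_sqr (u2*v3-u3*v2). rewrite /Rsqr. nra.
rewrite -(sqrt_Rsqr (sqrt U + sqrt V)); last lra.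
apply: sqrt_le_1_alt. rewrite /U /V /Rsqr in hsU hsV cs *. nra.
Qed.

Lemma rho_tri x y z : rho x z <= rho x y + rho y z.
Proof.
rewrite /rho.
replace (x sa - z sa) with ((x sa - y sa) + (y sa - z sa)) by ring.
replace (x sb - z sb) with ((x sb - y sb) + (y sb - z sb)) by ring.
replace (x sc - z sc) with ((x sc - y sc) + (y sc - z sc)) by ring.
apply: mink.
Qed.

Lemma rho_xx x : rho x x = 0.
Proof.
rewrite /rho !Rminus_diag /Rsqr.
replace (0 * 0 + 0 * 0 + 0 * 0) with 0 by ring. exact: sqrt_0.
Qed.

Lemma string_lb l x : rho x (last x l) <= string_len x l.
Proof.
elim: l x => [|y l IH] x /=; first by rewrite rho_xx; lra.
have := rho_tri x y (last y l). have := rho_le_edist x y. have := IH y. lra.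
Qed.

Section Metric.
Variable d : pt n -> pt n -> R.
Hypothesis hd : forall x y : pt n, in_CSN x -> in_CSN y ->
          is_glb (string_lengths x y) (d x y).

Lemma d_ge_rho x y : in_CSN x -> in_CSN y -> rho x y <= d x y.
Proof.
move=> hx hy. apply: (proj2 (hd hx hy)) => r [l [_ [hl ->]]].
rewrite -hl; exact: string_lb.
Qed.

Lemma d_le_edist p x y : in_orthant p x -> in_orthant p y -> d x y <= edist x y.
Proof.
move=> hx hy.
have hcx : in_CSN x by exists p. have hcy : in_CSN y by exists p.
have := proj1 (hd hcx hcy) (edist x y + 0).
rewrite Rplus_0_r; apply.
exists [:: y]; split; last by split => //=; rewrite Rplus_0_r.
split => //. by exists p.
Qed.

Lemma orth_mk p a b c : 0 <= a -> 0 <= b -> 0 <= c ->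
  (a <> 0 -> circular p sa) -> (b <> 0 -> circular p sb) -> (c <> 0 -> circular p sc) ->
  in_orthant p (mk a b c).
Proof.
move=> ha hb hc ca' cb' cc' A.
case: (eqVneq A sa) => [->|h1].
  by rewrite mk_a; split => // /ca' ?; split => //; exact: nt_sa.
case: (eqVneq A sb) => [->|h2].
  by rewrite mk_b; split => // /cb' ?; split => //; exact: nt_sb.
case: (eqVneq A sc) => [->|h3].
  by rewrite mk_c; split => // /cc' ?; split => //; exact: nt_sc.
rewrite /mk (negbTE h1) (negbTE h2) (negbTE h3). split; first lra. lra.
Qed.

Lemma d_mk p a b c a' b' c' : in_orthant p (mk a b c) -> in_orthant p (mk a' b' c') ->
  d (mk a b c) (mk a' b' c') = sqrt (Rsqr (a - a') + Rsqr (b - b') + Rsqr (c - c')).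
Proof.
move=> hx hy.
have hcx : in_CSN (mk a b c) by exists p. have hcy : in_CSN (mk a' b' c') by exists p.
have h1 := d_le_edist hx hy. have h2 := d_ge_rho hcx hcy.
rewrite edist_mk in h1. rewrite /rho !mk_a !mk_b !mk_c in h2. lra.
Qed.

Definition seg a b c a' b' c' (s : R) : pt n :=
  let L := d (mk a b c) (mk a' b' c') in
  mk (a + s / L * (a' - a)) (b + s / L * (b' - b)) (c + s / L * (c' - c)).

Definition okc (p : {perm 'I_n}) (A : {set 'I_n}) (a a' : R) := 0 <= a /\ 0 <= a' /\ (circular p A \/ (a = 0 /\ a' = 0)).

Lemma orth_comb p a b c a' b' c' t : okc p sa a a' -> okc p sb b b' -> okc p sc c c' ->
  0 <= t <= 1 ->
  in_orthant p (mk (a + t * (a' - a)) (b + t * (b' - b)) (c + t * (c' - c))).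
Proof.
move=> [ha [ha' oa]] [hb [hb' ob]] [hc [hc' oc]] ht.
apply: orth_mk; try nra.
- case: oa => [//|[-> ->]] h; exfalso; apply: h; ring.
- case: ob => [//|[-> ->]] h; exfalso; apply: h; ring.
- case: oc => [//|[-> ->]] h; exfalso; apply: h; ring.
Qed.

Lemma seg_geod p a b c a' b' c' : okc p sa a a' -> okc p sb b b' -> okc p sc c c' ->
  0 < Rsqr (a - a') + Rsqr (b - b') + Rsqr (c - c') ->
  geodesic (@in_CSN n) d (mk a b c) (mk a' b' c') (seg a b c a' b' c').
Proof.
move=> oa ob oc hQ.
have hx : in_orthant p (mk a b c).
  have := @orth_comb p a b c a' b' c' 0 oa ob oc ltac:(lra).
  by rewrite !Rmult_0_l !Rplus_0_r.
have hy : in_orthant p (mk a' b' c').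
  have := @orth_comb p a b c a' b' c' 1 oa ob oc ltac:(lra).
  have e : forall u v, u + 1 * (v - u) = v by move=> u v; ring.
  by rewrite !e.
set Q := Rsqr (a - a') + Rsqr (b - b') + Rsqr (c - c').
have hL : d (mk a b c) (mk a' b' c') = sqrt Q by exact: d_mk hx hy.
have Lpos : 0 < sqrt Q by apply: sqrt_lt_R0.
have LL : sqrt Q * sqrt Q = Q by apply: sqrt_sqrt; exact: Rlt_le.
have hseg : forall s, seg a b c a' b' c' s =
   mk (a + s / sqrt Q * (a' - a)) (b + s / sqrt Q * (b' - b)) (c + s / sqrt Q * (c' - c)).
  by move=> s; rewrite /seg hL.
have hin : forall s, 0 <= s <= sqrt Q -> in_orthant p (seg a b c a' b' c' s).
  move=> s hs; rewrite hseg; apply: orth_comb => //.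
  have e : s / sqrt Q * sqrt Q = s by field; lra.
  split; first by apply: Rmult_le_pos; [lra| apply/Rlt_le/Rinv_0_lt_compat; lra].
  nra.
rewrite /geodesic hL. split; [|split; [|split]].
- rewrite hseg /Rdiv !Rmult_0_l !Rplus_0_r //.
- rewrite hseg; congr mk; field; lra.
- by move=> s hs; exists p; apply: hin.
- move=> s t hs ht.
  rewrite (d_mk (hin s hs) (hin t ht)) ?hL -sqrt_Rsqr_abs.
  congr sqrt.
  transitivity ((s - t) * (s - t) * (Q / (sqrt Q * sqrt Q))).
    rewrite /Q /Rsqr; field; apply: Rgt_not_eq; exact: Lpos.
  rewrite LL /Rdiv Rinv_r /Rsqr; [ring|apply: Rgt_not_eq; exact: hQ].
Qed.



Lemma okc_c p A : circular p A -> okc p A 1 0 /\ okc p A 0 1.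
Proof. by move=> h; split; split; try lra; split; try lra; left. Qed.
Lemma okc_0 p A : okc p A 0 0.
Proof. by split; [lra|split; [lra|right]]. Qed.

Lemma dE2_val P Q r : Rsqr (fst P - fst Q) + Rsqr (snd P - snd Q) = r -> dE2 P Q = sqrt r.
Proof. by rewrite /dE2 => ->. Qed.

Lemma sq_of_sqrt X y : 0 <= X -> 0 <= y -> sqrt X <= y -> X <= y * y.
Proof.
move=> hX hy h. have := sqrt_sqrt X hX. have := sqrt_pos X. nra.
Qed.

Lemma main : ~ CAT0 (@in_CSN n) d.
Proof.
move=> [geo cat].
have D2 : sqrt 2 * sqrt 2 = 2 by apply: sqrt_sqrt; lra.
have Dpos : 0 < sqrt 2 by apply: sqrt_lt_R0; lra.
have S6 : sqrt 6 * sqrt 6 = 6 by apply: sqrt_sqrt; lra.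
have oa12 := orth_mk (a:=1) (b:=0) (c:=0) (p:=p12) ltac:(lra) ltac:(lra) ltac:(lra)
   (fun _ => circ_12a) (fun _ => circ_12b) (fun h => False_ind _ (h erefl)).
have ob12 := orth_mk (a:=0) (b:=1) (c:=0) (p:=p12) ltac:(lra) ltac:(lra) ltac:(lra)
   (fun _ => circ_12a) (fun _ => circ_12b) (fun h => False_ind _ (h erefl)).
have ob01 := orth_mk (a:=0) (b:=1) (c:=0) (p:=p01) ltac:(lra) ltac:(lra) ltac:(lra)
   (fun h => False_ind _ (h erefl)) (fun _ => circ_01b) (fun _ => circ_01c).
have oc01 := orth_mk (a:=0) (b:=0) (c:=1) (p:=p01) ltac:(lra) ltac:(lra) ltac:(lra)
   (fun h => False_ind _ (h erefl)) (fun _ => circ_01b) (fun _ => circ_01c).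
have oc1 := orth_mk (a:=0) (b:=0) (c:=1) (p:=pid) ltac:(lra) ltac:(lra) ltac:(lra)
   (fun _ => circ_1a) (fun h => False_ind _ (h erefl)) (fun _ => circ_1c).
have oa1 := orth_mk (a:=1) (b:=0) (c:=0) (p:=pid) ltac:(lra) ltac:(lra) ltac:(lra)
   (fun _ => circ_1a) (fun h => False_ind _ (h erefl)) (fun _ => circ_1c).
have dab : d (mk 1 0 0) (mk 0 1 0) = sqrt 2.
  by rewrite (d_mk oa12 ob12); congr sqrt; rewrite /Rsqr; ring.
have dbc : d (mk 0 1 0) (mk 0 0 1) = sqrt 2.
  by rewrite (d_mk ob01 oc01); congr sqrt; rewrite /Rsqr; ring.
have dca : d (mk 0 0 1) (mk 1 0 0) = sqrt 2.
  by rewrite (d_mk oc1 oa1); congr sqrt; rewrite /Rsqr; ring.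
have G0 : geodesic (@in_CSN n) d (mk 1 0 0) (mk 0 1 0) (seg 1 0 0 0 1 0).
  apply: (@seg_geod p12).
  - exact: (okc_c circ_12a).1.
  - exact: (okc_c circ_12b).2.
  - exact: okc_0.
  - rewrite /Rsqr; lra.
have G1 : geodesic (@in_CSN n) d (mk 0 1 0) (mk 0 0 1) (seg 0 1 0 0 0 1).
  apply: (@seg_geod p01).
  - exact: okc_0.
  - exact: (okc_c circ_01b).1.
  - exact: (okc_c circ_01c).2.
  - rewrite /Rsqr; lra.
have G2 : geodesic (@in_CSN n) d (mk 0 0 1) (mk 1 0 0) (seg 0 0 1 1 0 0).
  apply: (@seg_geod pid).
  - exact: (okc_c circ_1a).2.
  - exact: okc_0.
  - exact: (okc_c circ_1c).1.
  - rewrite /Rsqr; lra.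
have s0 : succ3 0 = 1%nat by [].
have s1 : succ3 1 = 2%nat by [].
have s2 : succ3 2 = 0%nat by [].
pose vv := fun k => match k with 0%nat => mk 1 0 0 | 1%nat => mk 0 1 0 | _ => mk 0 0 1 end.
pose gg := fun k => match k with 0%nat => seg 1 0 0 0 1 0 | 1%nat => seg 0 1 0 0 0 1 | _ => seg 0 0 1 1 0 0 end.
pose VV := fun k => match k with 0%nat => (0, 0) | 1%nat => (sqrt 2, 0) | _ => (sqrt 2 / 2, sqrt 6 / 2) end.
have A1 : forall k, (k < 3)%nat -> in_CSN (vv k).
  case=> [|[|[|k]]] // _; rewrite /vv /=; [exists p12 | exists p01 | exists pid]; assumption.
have A2 : forall k, (k < 3)%nat -> geodesic (@in_CSN n) d (vv k) (vv (succ3 k)) (gg k).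
  case=> [|[|[|k]]] // _; rewrite /vv /gg ?s0 ?s1 ?s2 /=.
have A3 : forall k, (k < 3)%nat -> dE2 (VV k) (VV (succ3 k)) = d (vv k) (vv (succ3 k)).
  case=> [|[|[|k]]] // _; rewrite /vv /VV ?s0 ?s1 ?s2 /=.
  - rewrite dab; apply: dE2_val => /=; rewrite /Rsqr; nra.
  - rewrite dbc; apply: dE2_val => /=; rewrite /Rsqr; nra.
  - rewrite dca; apply: dE2_val => /=; rewrite /Rsqr; nra.
have B1 : 0 <= sqrt 2 / 2 <= d (vv 0%nat) (vv (succ3 0)).
  rewrite s0 /vv /= dab; lra.
have B2 : 0 <= sqrt 2 / 2 <= d (vv 2%nat) (vv (succ3 2)).
  rewrite s2 /vv /= dca; lra.
have H := cat vv gg VV A1 A2 A3 0%nat 2%nat (sqrt 2 / 2) (sqrt 2 / 2) isT isT B1 B2.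
change (d (seg 1 0 0 0 1 0 (sqrt 2 / 2)) (seg 0 0 1 1 0 0 (sqrt 2 / 2)) <=
  dE2 (cmp_pt (0,0) (sqrt 2, 0) (d (mk 1 0 0) (mk 0 1 0)) (sqrt 2 / 2))
      (cmp_pt (sqrt 2 / 2, sqrt 6 / 2) (0,0) (d (mk 0 0 1) (mk 1 0 0)) (sqrt 2 / 2))) in H.
have e1 : seg 1 0 0 0 1 0 (sqrt 2 / 2) = mk (1/2) (1/2) 0.
  rewrite /seg /= dab; congr mk; field; lra.
have e2 : seg 0 0 1 1 0 0 (sqrt 2 / 2) = mk (1/2) 0 (1/2).
  rewrite /seg /= dca; congr mk; field; lra.
have e3 : dE2 (cmp_pt (0,0) (sqrt 2, 0) (sqrt 2) (sqrt 2 / 2))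
      (cmp_pt (sqrt 2 / 2, sqrt 6 / 2) (0,0) (sqrt 2) (sqrt 2 / 2)) = sqrt (1/2).
  apply: dE2_val; rewrite /cmp_pt /=.
  replace (sqrt 2 / 2 / sqrt 2) with (1/2) by (field; lra).
  rewrite /Rsqr; nra.
rewrite dab dca e1 e2 e3 in H.
have om1 := orth_mk (a:=1/2) (b:=1/2) (c:=0) (p:=p12) ltac:(lra) ltac:(lra) ltac:(lra)
   (fun _ => circ_12a) (fun _ => circ_12b) (fun h => False_ind _ (h erefl)).
have om2 := orth_mk (a:=1/2) (b:=0) (c:=1/2) (p:=pid) ltac:(lra) ltac:(lra) ltac:(lra)
   (fun _ => circ_1a) (fun h => False_ind _ (h erefl)) (fun _ => circ_1c).
have cm1 : in_CSN (mk (1/2) (1/2) 0) by exists p12.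
have cm2 : in_CSN (mk (1/2) 0 (1/2)) by exists pid.
have [h [h0 [hL [hin hdist]]]] := geo _ _ cm1 cm2.
move: H h0 hL hin hdist.
set Ld := d (mk (1/2) (1/2) 0) (mk (1/2) 0 (1/2)) => H h0 hL hin hdist.
have L0 : 0 <= Ld.
  have := d_ge_rho cm1 cm2. have := sqrt_pos (Rsqr (mk (1/2) (1/2) 0 sa - mk (1/2) 0 (1/2) sa) +
   Rsqr (mk (1/2) (1/2) 0 sb - mk (1/2) 0 (1/2) sb) + Rsqr (mk (1/2) (1/2) 0 sc - mk (1/2) 0 (1/2) sc)).
  rewrite /rho -/Ld. lra.
have hp : in_CSN (h (Ld / 2)) by apply: hin; lra.
have d1 : d (mk (1/2) (1/2) 0) (h (Ld / 2)) = Ld / 2.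
  rewrite -h0 hdist; try lra.
  rewrite Rabs_minus_sym Rminus_0_r Rabs_pos_eq; lra.
have d2 : d (h (Ld / 2)) (mk (1/2) 0 (1/2)) = Ld / 2.
  rewrite -hL hdist; try lra.
  replace (Ld / 2 - Ld) with (- (Ld / 2)) by field.
  rewrite Rabs_Ropp Rabs_pos_eq; lra.
have r1 := d_ge_rho cm1 hp. have r2 := d_ge_rho hp cm2.
rewrite d1 /rho !mk_a !mk_b !mk_c in r1.
rewrite d2 /rho !mk_a !mk_b !mk_c in r2.
set pa := h (Ld / 2) sa in r1 r2.
set pb := h (Ld / 2) sb in r1 r2.
set pc := h (Ld / 2) sc in r1 r2.
have q1 := @sq_of_sqrt _ (Ld / 2) (Rplus_le_le_0_compat _ _ (Rplus_le_le_0_compat _ _ (Rle_0_sqr _) (Rle_0_sqr _)) (Rle_0_sqr _)) ltac:(lra) r1.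
have q2 := @sq_of_sqrt _ (Ld / 2) (Rplus_le_le_0_compat _ _ (Rplus_le_le_0_compat _ _ (Rle_0_sqr _) (Rle_0_sqr _)) (Rle_0_sqr _)) ltac:(lra) r2.
have hh : sqrt (1/2) * sqrt (1/2) = 1/2 by apply: sqrt_sqrt; lra.
have LL : Ld * Ld <= 1/2 by have := sqrt_pos (1/2); nra.
have key : 2 * Rsqr (pa - 1/2) + 2 * Rsqr (pb - 1/4) + 2 * Rsqr (pc - 1/4) <= 0.
  rewrite /Rsqr in q1 q2 *. nra.
have ga := Rle_0_sqr (pa - 1/2). have gb := Rle_0_sqr (pb - 1/4). have gc := Rle_0_sqr (pc - 1/4).
have na : pa <> 0.
  move=> e; rewrite e in key.
  have : Rsqr (0 - 1/2) = 1/4 by rewrite /Rsqr; field.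
  lra.
have nb : pb <> 0.
  move=> e; rewrite e in key.
  have : Rsqr (0 - 1/4) = 1/16 by rewrite /Rsqr; field.
  lra.
have nc : pc <> 0.
  move=> e; rewrite e in key.
  have : Rsqr (0 - 1/4) = 1/16 by rewrite /Rsqr; field.
  lra.
case: hp => pi hpi.
apply: (@nocirc pi).
- exact: (proj2 (hpi sa) na).2.
- exact: (proj2 (hpi sb) nb).2.
- exact: (proj2 (hpi sc) nc).2.
Qed.

End Metric.
End Comb.

Theorem proposition6 (n : nat) (hn : (4 <= n)%N) (d : pt n -> pt n -> R)
  (hd : forall x y : pt n, in_CSN x -> in_CSN y ->
          is_glb (string_lengths x y) (d x y)) :
  ~ CAT0 (@in_CSN n) d.
Proof.
case: n hn d hd => [|[|[|[|m]]]] // _ d hd.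
exact: (main hd).
Qed.
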